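(* Let $(\mathcal{A},\varphi)$ be a tracial noncommutative probability space. Let $T_1=(V_1,E_1,\gamma_1)$ and $T_2=(V_2,E_2,\gamma_2)$ be test graphs in $\mathcal{A}$ with $T_2$ two-edge-connected. Let $T_1\sharp T_2$ be the test graph obtained from disjoint copies of $T_1$ and $T_2$ by identifying an arbitrary vertex $v_1$ of $T_1$ with an arbitrary vertex $v_2$ of $T_2$. Then $\tau_\varphi[T_1\sharp T_2]=\tau_\varphi[T_1]\,\tau_\varphi[T_2]$; in particular this is independent of the choice of $v_1$ and $v_2$.
   Context: $(\mathcal{A},\varphi)$: unital complex algebra with unital tracial linear functional; free cumulants $\kappa_n$ determined by $\varphi(a_1\cdots a_n)=\sum_{\pi\in NC(n)}\prod_{B\in\pi}\kappa_{|B|}[(a_i)_{i\in B}]$. A test graph in $\mathcal{A}$ is a finite connected directed multigraph (loops, parallel edges allowed) with edge labels in $\mathcal{A}$; $T^\pi$ identifies the vertices in each block of a partition $\pi$ of the vertex set. A cactus is a connected multigraph in which every edge lies in exactly one simple cycle (loops, pairs of parallel edges count as cycles); these are its pads; an oriented cactus is one whose pads are directed cycles. $\tau^0_\varphi[T]=\prod_{C\in\mathrm{Pads}(T)}\kappa_{n_C}[\gamma(e_1),\dots,\gamma(e_{n_C})]$ if $T$ is an oriented cactus (edges of $C$ listed with $\mathrm{src}(e_i)=\mathrm{tgt}(e_{i+1})$, indices mod $n_C$), and $0$ otherwise; $\tau_\varphi[T]=\sum_{\pi}\tau^0_\varphi[T^\pi]$ over all partitions of the vertex set. A connected multigraph is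 two-edge-connected if it has no cut-edge (no single edge whose deletion disconnects it). *)

(* Defs.v *)
From HB Require Import structures.
From mathcomp Require Import all_boot all_order all_algebra.
From mathcomp Require Import complex.
From mathcomp Require Import reals.
Set Implicit Arguments.
Unset Strict Implicit.
Unset Printing Implicit Defensive.
Import Order.TTheory GRing.Theory Num.Theory.
Local Open Scope ring_scope.

Section Graphs.
Variable A : Type.
Variables (K : nzRingType).

Section Generic.
Variables (E W : finType) (src tgt : E -> W).

Definition joins (e : E) (x y : W) : bool :=
  ((src e == x) && (tgt e == y)) || ((src e == y) && (tgt e == x)).

Definition gconnected (ES : {set E}) (VS : {set W}) : bool :=
  [forall x in VS, forall y in VS,
     connect (fun a b => [exists e in ES, joins e a b]) x y].

Definition is_cycle (C : {set E}) : bool :=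
  (0 < #|C|)%N &&
  [exists es : (#|C|).-tuple E, exists vs : (#|C|).-tuple W,
    [&& uniq es, uniq vs, [set x in es] == C &
      [forall i : 'I_#|C|,
         joins (tnth es i) (tnth vs i) (nth (tnth vs i) vs ((i.+1) %% #|C|))]]].

Definition is_dcycle (C : {set E}) : bool :=
  (0 < #|C|)%N &&
  [exists es : (#|C|).-tuple E, exists vs : (#|C|).-tuple W,
    [&& uniq es, uniq vs, [set x in es] == C &
      [forall i : 'I_#|C|,
         (tgt (tnth es i) == tnth vs i) &&
         (src (tnth es i) == nth (tnth vs i) vs ((i.+1) %% #|C|))]]].

Definition cactus (VS : {set W}) : bool :=
  gconnected setT VS &&
  [forall e : E, #|[set C : {set E} | is_cycle C & e \in C]| == 1%N].

Definition oriented_cactus (VS : {set W}) : bool :=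
  cactus VS && [forall C : {set E}, is_cycle C ==> is_dcycle C].

(* edges of a directed pad listed as e_1, ..., e_n with src e_i = tgt e_(i+1) *)
Definition pad_next (C : {set E}) (e : E) : E :=
  odflt e [pick e' in C | tgt e' == src e].

Definition pad_edges (C : {set E}) : seq E :=
  if [pick e in C] is Some e0 then traject (pad_next C) e0 #|C| else [::].

Definition tau0 (kappa : seq A -> K) (gamma : E -> A) (VS : {set W}) : K :=
  if oriented_cactus VS then
    \prod_(C : {set E} | is_cycle C) kappa [seq gamma e | e <- pad_edges C]
  else 0.

End Generic.

Definition tau (kappa : seq A -> K) (V E : finType) (src tgt : E -> V)
  (gamma : E -> A) : K :=
  \sum_(P : {set {set V}} | partition P [set: V])
    tau0 (pblock P \o src) (pblock P \o tgt) kappa gamma P.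

Definition two_edge_connected (V E : finType) (src tgt : E -> V) : bool :=
  gconnected src tgt setT setT && [forall e : E, gconnected src tgt [set~ e] setT].

Section Sharp.
Variables (V1 E1 V2 E2 : finType) (v1 : V1) (v2 : V2).

Definition sharpV := {w : (V1 + V2)%type | w != inr v2}.
Definition sharp_base : sharpV := exist _ (inl v1) isT.
Definition sharp_proj (w : (V1 + V2)%type) : sharpV := insubd sharp_base w.
(* note: sharp_proj (inr v2) = sharp_base = inl v1, identity otherwise *)

Definition sum_app (S1 S2 : Type) (f1 : E1 -> S1) (f2 : E2 -> S2)
  (e : (E1 + E2)%type) : (S1 + S2)%type :=
  match e with inl e1 => inl (f1 e1) | inr e2 => inr (f2 e2) end.

Definition sharp_src (s1 : E1 -> V1) (s2 : E2 -> V2) (e : (E1 + E2)%type) : sharpV :=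
  sharp_proj (sum_app s1 s2 e).

Definition sharp_lab (g1 : E1 -> A) (g2 : E2 -> A) (e : (E1 + E2)%type) : A :=
  match e with inl e1 => g1 e1 | inr e2 => g2 e2 end.
End Sharp.

End Graphs.

Definition noncrossing (n : nat) (P : {set {set 'I_n}}) : bool :=
  [forall B in P, forall B' in P, (B != B') ==>
    [forall a : 'I_n, forall b : 'I_n, forall c : 'I_n, forall d : 'I_n,
      [&& (a < b)%N, (b < c)%N & (c < d)%N] ==>
      ~~ [&& a \in B, c \in B, b \in B' & d \in B']]].

Definition NCpart (n : nat) (P : {set {set 'I_n}}) : bool :=
  partition P [set: 'I_n] && noncrossing P.

(* Main.v *)
Require Import Defs.
From HB Require Import structures.
From mathcomp Require Import all_boot all_order all_algebra.
From mathcomp Require Import complex reals.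
Set Implicit Arguments. Unset Strict Implicit. Unset Printing Implicit Defensive.

Section CycSeq.
Variables (E W : finType).
Implicit Types (J : E -> W -> W -> bool) (es : seq E) (vs : seq W).

Definition gcyc J (C : {set E}) : bool :=
  (0 < #|C|)%N &&
  [exists es : (#|C|).-tuple E, exists vs : (#|C|).-tuple W,
    [&& uniq es, uniq vs, [set x in es] == C &
      [forall i : 'I_#|C|,
         J (tnth es i) (tnth vs i) (nth (tnth vs i) vs ((i.+1) %% #|C|))]]].

Definition cyc_seq J es vs :=
  [&& uniq es, uniq vs, size vs == size es, (0 < size es)%N &
      all (fun p => J p.1 p.2.1 p.2.2) (zip es (zip vs (rot 1 vs)))].

Lemma nth_rot1 (w0 : W) vs i : (i < size vs)%N ->
  nth w0 (rot 1 vs) i = nth w0 vs ((i.+1) %% size vs).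
Proof.
case: vs => [|x s] //= Hi; rewrite rot1_cons nth_rcons.
case: (ltnP i (size s)) => [Hlt|Hge].
  by rewrite modn_small.
have -> : i = size s by apply/eqP; rewrite eqn_leq Hge -ltnS Hi.
by rewrite eqxx modnn.
Qed.

Lemma all_cycP J es vs e0 w0 : size vs = size es ->
  reflect (forall i, (i < size es)%N ->
            J (nth e0 es i) (nth w0 vs i) (nth w0 vs ((i.+1) %% size es)))
    (all (fun p => J p.1 p.2.1 p.2.2) (zip es (zip vs (rot 1 vs)))).
Proof.
move=> Hs.
have Hsz : size (zip es (zip vs (rot 1 vs))) = size es.
  by rewrite !size_zip size_rot Hs !minnn.
have Hn : forall i, nth (e0, (w0, w0)) (zip es (zip vs (rot 1 vs))) i =
   (nth e0 es i, (nth w0 vs i, nth w0 (rot 1 vs) i)).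
  move=> i; rewrite nth_zip; last by rewrite size_zip size_rot Hs !minnn.
  by rewrite nth_zip // size_rot.
apply: (iffP (all_nthP (e0, (w0, w0)))); rewrite Hsz => H i Hi.
  by have := H i Hi; rewrite Hn /= nth_rot1 ?Hs.
by rewrite Hn /= nth_rot1 ?Hs //; apply: H.
Qed.

Lemma gcycP J C :
  reflect (exists es vs, cyc_seq J es vs /\ [set x in es] = C) (gcyc J C).
Proof.
apply: (iffP andP).
  case=> C0 /existsP[es /existsP[vs /and4P[ues uvs /eqP Hes /forallP H]]].
  exists es, vs; split => //; apply/and5P; split => //.
    by rewrite !size_tuple.
    by rewrite size_tuple.
  have [e0 _] : exists e0 : E, True.
    by move: C0; rewrite card_gt0 => /set0Pn[x _]; exists x.
  have [w0 _] : exists w0 : W, True.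
    by move: C0; rewrite -(size_tuple vs); case: (tval vs) => // w ? _; exists w.
  apply/(all_cycP _ e0 w0); first by rewrite !size_tuple.
  move=> i; rewrite size_tuple => Hi.
  have := H (Ordinal Hi); rewrite !(tnth_nth e0) !(tnth_nth w0) /=.
  by rewrite (set_nth_default w0) // size_tuple ltn_pmod.
case=> es [vs [/and5P[ues uvs /eqP Hsz Hpos Hall] Hes]].
have HC : #|C| = size es by rewrite -Hes cardsE (card_uniqP ues).
split; first by rewrite HC.
have Hes' : size es == #|C| by rewrite HC.
have Hvs' : size vs == #|C| by rewrite HC Hsz.
apply/existsP; exists (Tuple Hes'); apply/existsP; exists (Tuple Hvs').
apply/and4P; split => //; first by rewrite Hes.
apply/forallP => i.
have [e0 _] : exists e0 : E, True by case: (es) Hpos => // e _ _; exists e.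
have [w0 _] : exists w0 : W, True by case: (vs) Hsz Hpos => [<-|w _ _ _] //; exists w.
rewrite !(tnth_nth e0) !(tnth_nth w0) /=.
have Hi : (i < size es)%N by rewrite -HC.
rewrite (set_nth_default w0); last by rewrite Hsz -HC ltn_pmod // HC.
by move/(all_cycP _ e0 w0 Hsz): Hall => /(_ i Hi); rewrite -HC.
Qed.

End CycSeq.

Section Generic.
Variables (E W : finType) (src tgt : E -> W).

Definition Jdir (e : E) (a b : W) := (tgt e == a) && (src e == b).

Lemma is_cycleE C : is_cycle src tgt C = gcyc (joins src tgt) C.
Proof. by []. Qed.
Lemma is_dcycleE C : is_dcycle src tgt C = gcyc Jdir C.
Proof. by []. Qed.
End Generic.

Lemma zip_mapr (T1 T2 T3 : Type) (h : T2 -> T3) (a : seq T1) (b : seq T2) :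
  zip a (map h b) = map (fun p => (p.1, h p.2)) (zip a b).
Proof. by elim: a b => [|x a IH] [|y b] //=; rewrite IH. Qed.

Lemma zip_mapl (T1 T2 T3 : Type) (h : T1 -> T3) (a : seq T1) (b : seq T2) :
  zip (map h a) b = map (fun p => (h p.1, p.2)) (zip a b).
Proof. by elim: a b => [|x a IH] [|y b] //=; rewrite IH. Qed.

Lemma eq_traject_fun (T : Type) (f g : T -> T) : f =1 g -> forall x n, traject f x n = traject g x n.
Proof. by move=> Hfg x n; elim: n x => //= n IH x; rewrite IH Hfg. Qed.

Section Generic2.
Variables (E W : finType) (src tgt : E -> W).

Definition cc := [forall e, #|[set C : {set E} | is_cycle src tgt C & e \in C]| == 1%N]
   && [forall C : {set E}, is_cycle src tgt C ==> is_dcycle src tgt C].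

Definition pprod (A : Type) (K : nzRingType) (kappa : seq A -> K) (gamma : E -> A) :=
  (\prod_(C : {set E} | is_cycle src tgt C) kappa [seq gamma e | e <- pad_edges src tgt C])%R.

Lemma tau0E (A : Type) (K : nzRingType) (kappa : seq A -> K) gamma VS :
  tau0 src tgt kappa gamma VS =
  if gconnected src tgt setT VS && cc then pprod kappa gamma else 0%R.
Proof. by rewrite /tau0 /oriented_cactus /cactus /cc -!andbA. Qed.

End Generic2.

Section Ker.
Variables (E V W W' : finType) (s t : E -> V).

Lemma cyc_seq_lift (f : V -> W) (J : E -> W -> W -> bool) es vs :
  (forall e a b, J e a b -> a \in codom f) -> cyc_seq J es vs -> exists u, vs = map f u.
Proof.
move=> HJ /and5P[_ _ /eqP Hsz Hpos Hall].
have Hin : all (fun a => a \in codom f) vs.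
  case: es Hpos Hsz Hall => // e0 es' _ Hsz Hall.
  case: vs Hsz Hall => // w0 vs' Hsz Hall.
  apply/(all_nthP w0) => i Hi.
  move/(all_cycP _ e0 w0 Hsz): Hall => /(_ i); rewrite -Hsz => /(_ Hi).
  exact: HJ.
exists (pmap (fun a => [pick x | f x == a]) vs).
elim: vs Hin {Hsz Hall} => //= a vs IH /andP[Ha Hvs].
case: pickP => [x /eqP Hx|H0]; first by rewrite /= Hx -IH.
by move/codomP: Ha => [x Hx]; move: (H0 x); rewrite Hx eqxx.
Qed.

Variables (f : V -> W) (g : V -> W').
Hypothesis Hker : forall x y, (f x == f y) = (g x == g y).

Lemma mem_map_ker x u : (f x \in map f u) = (g x \in map g u).
Proof. by elim: u => //= y u IH; rewrite !in_cons IH Hker. Qed.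

Lemma uniq_map_ker u : uniq (map f u) = uniq (map g u).
Proof. by elim: u => //= y u IH; rewrite IH mem_map_ker. Qed.

Lemma cyc_seq_ker (Jf : E -> W -> W -> bool) (Jg : E -> W' -> W' -> bool) es u :
  (forall e x y, Jf e (f x) (f y) = Jg e (g x) (g y)) ->
  cyc_seq Jf es (map f u) = cyc_seq Jg es (map g u).
Proof.
move=> HJ; rewrite /cyc_seq uniq_map_ker !size_map -!map_rot !zip_mapl !zip_mapr.
rewrite !all_map; congr [&& _, _, _, _ & _]; apply: eq_all => -[e [x y]] /=.
exact: HJ.
Qed.

Lemma ker_cycle1 C : is_cycle (f \o s) (f \o t) C -> is_cycle (g \o s) (g \o t) C.
Proof.
rewrite !is_cycleE => /gcycP[es [vs [Hc HC]]].
have [u Hu] : exists u, vs = map f u.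
  apply: (cyc_seq_lift _ Hc) => e a b /=.
  by rewrite /joins => /orP[]/andP[/eqP H1 /eqP H2]; [rewrite -H1 | rewrite -H2]; apply: codom_f.
apply/gcycP; exists es, (map g u); split => //.
rewrite -(@cyc_seq_ker (joins (f \o s) (f \o t))) -?Hu //.
by move=> e x y; rewrite /joins /= !Hker.
Qed.

Lemma ker_dcycle1 C : is_dcycle (f \o s) (f \o t) C -> is_dcycle (g \o s) (g \o t) C.
Proof.
rewrite !is_dcycleE => /gcycP[es [vs [Hc HC]]].
have [u Hu] : exists u, vs = map f u.
  apply: (cyc_seq_lift _ Hc) => e a b /=.
  by rewrite /Jdir => /andP[/eqP H1 _]; rewrite -H1; apply: codom_f.
apply/gcycP; exists es, (map g u); split => //.
rewrite -(@cyc_seq_ker (Jdir (f \o s) (f \o t))) -?Hu //.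
by move=> e x y; rewrite /Jdir /= !Hker.
Qed.

Lemma ker_pad C : pad_edges (f \o s) (f \o t) C = pad_edges (g \o s) (g \o t) C.
Proof.
rewrite /pad_edges; case: pickP => // e0 _.
apply: eq_traject_fun => e; rewrite /pad_next; congr odflt.
by apply: eq_pick => e' /=; rewrite Hker.
Qed.

End Ker.

Section Ker2.
Variables (E V W W' : finType) (s t : E -> V) (f : V -> W) (g : V -> W').
Hypothesis Hker : forall x y, (f x == f y) = (g x == g y).

Lemma ker_cycle C : is_cycle (f \o s) (f \o t) C = is_cycle (g \o s) (g \o t) C.
Proof.
apply/idP/idP; first exact: ker_cycle1.
by apply: ker_cycle1 => x y; rewrite Hker.
Qed.

Lemma ker_dcycle C : is_dcycle (f \o s) (f \o t) C = is_dcycle (g \o s) (g \o t) C.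
Proof.
apply/idP/idP; first exact: ker_dcycle1.
by apply: ker_dcycle1 => x y; rewrite Hker.
Qed.

Lemma ker_cc : cc (f \o s) (f \o t) = cc (g \o s) (g \o t).
Proof.
rewrite /cc; congr andb.
  apply: eq_forallb => e; congr (_ == _); apply: eq_card => C.
  by rewrite !inE ker_cycle.
by apply: eq_forallb => C; rewrite ker_cycle ker_dcycle.
Qed.

Lemma ker_pprod (A : Type) (K : nzRingType) (kappa : seq A -> K) gamma :
  pprod (f \o s) (f \o t) kappa gamma = pprod (g \o s) (g \o t) kappa gamma.
Proof.
rewrite /pprod (eq_bigl _ _ ker_cycle); apply: eq_bigr => C _.
by rewrite (@ker_pad _ _ _ _ s t f g Hker).
Qed.

End Ker2.

Lemma connect_map (T T' : finType) (r : rel T) (r' : rel T') (f : T -> T') x y :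
  (forall a b, r a b -> r' (f a) (f b)) -> connect r x y -> connect r' (f x) (f y).
Proof.
move=> Hr /connectP[p Hp ->]; elim: p x Hp => //= z p IH x /andP[Hxz Hp].
by apply: connect_trans (connect1 (Hr _ _ Hxz)) (IH _ Hp).
Qed.

Lemma joinsC (E W : finType) (s t : E -> W) e a b : joins s t e a b = joins s t e b a.
Proof. by rewrite /joins orbC. Qed.

Lemma gconn_label (E V W : finType) (s t : E -> V) (f : V -> W) (ES : {set E}) (VS : {set W}) :
  gconnected s t ES setT -> {subset VS <= codom f} ->
  gconnected (f \o s) (f \o t) ES VS.
Proof.
move=> /forallP H HVS; apply/forallP => a; apply/implyP => Ha; apply/forallP => b; apply/implyP => Hb.
move/HVS/codomP: Ha => [x ->]; move/HVS/codomP: Hb => [y ->].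
move: (H x) => /implyP /(_ (in_setT _)) /forallP /(_ y) /implyP /(_ (in_setT _)).
apply: connect_map => a' b' /existsP[e /andP[He Hj]]; apply/existsP; exists e.
rewrite He /=; move: Hj; rewrite /joins /=.
by case/orP => /andP[/eqP-> /eqP->]; rewrite !eqxx ?orbT.
Qed.

Section SharpBasics.
Variables (V1 E1 V2 E2 : finType) (v1 : V1) (v2 : V2).
Variables (src1 tgt1 : E1 -> V1) (src2 tgt2 : E2 -> V2).

Definition iota1 (x : V1) : sharpV V1 v2 := sharp_proj v1 v2 (inl x).
Definition iota2 (y : V2) : sharpV V1 v2 := sharp_proj v1 v2 (inr y).

Lemma iota2_v2 : iota2 v2 = sharp_base v1 v2.
Proof. by rewrite /iota2 /sharp_proj /insubd insubF //= eqxx. Qed.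

Lemma iota1_v1 : iota1 v1 = sharp_base v1 v2.
Proof. by apply: val_inj; rewrite /iota1 /sharp_proj insubdK. Qed.

Lemma val_iota1 x : val (iota1 x) = inl x.
Proof. by rewrite /iota1 /sharp_proj insubdK. Qed.

Lemma val_iota2 y : y != v2 -> val (iota2 y) = inr y.
Proof. by move=> Hy; rewrite /iota2 /sharp_proj insubdK //= (inj_eq (@inr_inj _ _)). Qed.

Lemma sharpV_cases (w : sharpV V1 v2) : (exists x, w = iota1 x) \/ (exists2 y, y != v2 & w = iota2 y).
Proof.
case: w => -[x|y] H.
  by left; exists x; apply: val_inj; rewrite val_iota1.
have Hy : y != v2 by move: H; rewrite /= (inj_eq (@inr_inj _ _)).
by right; exists y => //; apply: val_inj; rewrite val_iota2.
Qed.

Lemma iota12 x y : iota1 x = iota2 y -> x = v1 /\ y = v2.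
Proof.
case: (eqVneq y v2) => [->|Hy].
  by rewrite iota2_v2 -iota1_v1 => /(congr1 val); rewrite !val_iota1 => -[->].
by move/(congr1 val); rewrite val_iota1 val_iota2.
Qed.

Lemma iota1_inj : injective iota1.
Proof. by move=> x y /(congr1 val); rewrite !val_iota1 => -[]. Qed.

Lemma iota2_inj : injective iota2.
Proof.
move=> x y; case: (eqVneq x v2) => [->|Hx]; case: (eqVneq y v2) => [->|Hy] //.
- rewrite iota2_v2 -iota1_v1 => /iota12 [_ H]; by rewrite H.
- rewrite iota2_v2 -iota1_v1 => /esym /iota12 [_ H]; by rewrite H.
- by move/(congr1 val); rewrite !val_iota2 // => -[].
Qed.

Definition sS := sharp_src v1 v2 src1 src2.
Definition sT := sharp_src v1 v2 tgt1 tgt2.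

Lemma sS_inl e : sS (inl e) = iota1 (src1 e). Proof. by []. Qed.
Lemma sS_inr e : sS (inr e) = iota2 (src2 e). Proof. by []. Qed.
Lemma sT_inl e : sT (inl e) = iota1 (tgt1 e). Proof. by []. Qed.
Lemma sT_inr e : sT (inr e) = iota2 (tgt2 e). Proof. by []. Qed.

Lemma sharp_connected :
  gconnected src1 tgt1 setT setT -> gconnected src2 tgt2 setT setT ->
  gconnected sS sT setT setT.
Proof.
move=> /forallP H1 /forallP H2.
set r := (fun a b => [exists e in setT, joins sS sT e a b]).
have Hsym : connect_sym r.
  by apply: sym_connect_sym => a b; apply/existsP/existsP => -[e He]; exists e; rewrite joinsC.
have Hb : forall w, connect r w (sharp_base v1 v2).
  move=> w; case: (sharpV_cases w) => [[x ->]|[y _ ->]].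
    rewrite -iota1_v1; move: (H1 x) => /implyP /(_ (in_setT _)) /forallP /(_ v1) /implyP /(_ (in_setT _)).
    apply: connect_map => a b /existsP[e /andP[_ He]]; apply/existsP; exists (inl e).
    by rewrite inE /joins sS_inl sT_inl !(inj_eq iota1_inj).
  rewrite -iota2_v2; move: (H2 y) => /implyP /(_ (in_setT _)) /forallP /(_ v2) /implyP /(_ (in_setT _)).
  apply: connect_map => a b /existsP[e /andP[_ He]]; apply/existsP; exists (inr e).
  by rewrite inE /joins sS_inr sT_inr !(inj_eq iota2_inj).
apply/forallP => a; apply/implyP => _; apply/forallP => b; apply/implyP => _.
by apply: connect_trans (Hb a) _; rewrite Hsym.
Qed.

End SharpBasics.

Lemma enum_sumE (E1 E2 : finType) :
  Finite.enum (E1 + E2)%type = map inl (Finite.enum E1) ++ map inr (Finite.enum E2).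
Proof. by rewrite {1}unlock. Qed.

Lemma pick_sum (E1 E2 : finType) (P : pred (E1 + E2)%type) :
  pick P = if pick (fun x => P (inl x)) is Some x then Some (inl x)
           else omap inr (pick (fun x => P (inr x))).
Proof.
rewrite /pick /enum_mem enum_sumE filter_cat !filter_map.
by case: (filter _ (Finite.enum E1)) => //=; case: (filter _ (Finite.enum E2)).
Qed.

Lemma all_codom (T T' : finType) (f : T -> T') (s : seq T') :
  all (fun a => a \in codom f) s -> exists u, s = map f u.
Proof.
move=> Hin; exists (pmap (fun a => [pick x | f x == a]) s).
elim: s Hin => //= a s IH /andP[Ha Hs].
case: pickP => [x /eqP Hx|H0]; first by rewrite /= Hx -IH.
by move/codomP: Ha => [x Hx]; move: (H0 x); rewrite Hx eqxx.
Qed.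

Lemma set_map (T T' : finType) (f : T -> T') (s : seq T) :
  [set x in map f s] = f @: [set x in s].
Proof.
apply/setP => y; rewrite inE; apply/mapP/imsetP => -[x Hx ->]; exists x => //.
  by rewrite inE.
by move: Hx; rewrite inE.
Qed.

Section Emb.
Variables (E E' W : finType) (i : E -> E') (Hi : injective i).

Lemma gcyc_emb (J : E -> W -> W -> bool) (J' : E' -> W -> W -> bool) (C : {set E}) :
  (forall e a b, J' (i e) a b = J e a b) -> gcyc J' (i @: C) = gcyc J C.
Proof.
move=> HJ.
have Hcs : forall es vs, cyc_seq J' (map i es) vs = cyc_seq J es vs.
  move=> es vs; rewrite /cyc_seq (map_inj_uniq Hi) size_map zip_mapl all_map.
  by congr [&& _, _, _, _ & _]; apply: eq_all => -[e [a b]] /=.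
apply/gcycP/gcycP => -[es [vs [Hc HC]]].
  have [u Hu] : exists u, es = map i u.
    apply: all_codom; apply/allP => x Hx.
    have : x \in i @: C by rewrite -HC inE.
    by case/imsetP => y _ ->; rewrite codom_f.
  exists u, vs; split; first by rewrite -Hcs -Hu.
  by apply: (imset_inj Hi); rewrite -set_map -Hu.
exists (map i es), vs; split; first by rewrite Hcs.
by rewrite set_map HC.
Qed.

Variables (s t : E -> W) (s' t' : E' -> W).
Hypotheses (Hs : forall e, s' (i e) = s e) (Ht : forall e, t' (i e) = t e).
Hypothesis Hpick : forall P : pred E', (forall x, P x -> x \in codom i) ->
  pick P = omap i (pick (fun x => P (i x))).

Lemma emb_cycle (C : {set E}) : is_cycle s' t' (i @: C) = is_cycle s t C.
Proof. by rewrite !is_cycleE; apply: gcyc_emb => e a b; rewrite /joins Hs Ht. Qed.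

Lemma emb_dcycle (C : {set E}) : is_dcycle s' t' (i @: C) = is_dcycle s t C.
Proof. by rewrite !is_dcycleE; apply: gcyc_emb => e a b; rewrite /Jdir Hs Ht. Qed.

Lemma emb_pad (C : {set E}) : pad_edges s' t' (i @: C) = map i (pad_edges s t C).
Proof.
have Hnext : forall e, pad_next s' t' (i @: C) (i e) = i (pad_next s t C e).
  move=> e; rewrite /pad_next Hpick; last first.
    by move=> x /andP[/imsetP[y _ ->] _]; rewrite codom_f.
  rewrite (eq_pick (Q := fun x => (x \in C) && (t x == s e))).
    by case: pickP.
  by move=> x /=; rewrite (mem_imset _ _ Hi) Ht Hs.
rewrite /pad_edges Hpick; last by move=> x /imsetP[y _ ->]; rewrite codom_f.
rewrite (eq_pick (Q := mem C)); last by move=> x /=; rewrite (mem_imset _ _ Hi).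
case: pickP => //= e0 _; rewrite (card_imset _ Hi).
elim: #|C| e0 => //= n IH e0; by rewrite Hnext IH.
Qed.

End Emb.

Lemma cyclic_switch (p : nat -> bool) n i j : (i < n)%N -> (j < n)%N -> p i -> ~~ p j ->
  exists2 k, (k < n)%N & p k && ~~ p (k.+1 %% n).
Proof.
move=> Hi Hj Hpi Hpj.
suff /existsP[k Hk] : [exists k : 'I_n, p k && ~~ p (k.+1 %% n)] by exists k.
apply: contraT => H; exfalso; move/negP: Hpj; apply.
have Hn : (0 < n)%N by apply: leq_ltn_trans Hi.
have Hall : forall m, p ((i + m) %% n).
  elim=> [|m IH]; first by rewrite addn0 modn_small.
  rewrite addnS -addn1 -modnDml addn1.
  have Hk : (((i + m) %% n) < n)%N by rewrite ltn_pmod.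
  apply: contraT => Hnot; exfalso; move/negP: H; apply; apply/existsP.
  by exists (Ordinal Hk); rewrite /= IH Hnot.
have := Hall (j + (n - i)); rewrite addnCA subnKC ?(ltnW Hi) //.
by rewrite -modnDmr modnn addn0 modn_small.
Qed.

Section Glue.
Variables (V1 E1 V2 E2 : finType) (v1 : V1) (v2 : V2).
Variables (src1 tgt1 : E1 -> V1) (src2 tgt2 : E2 -> V2).
Variables (W : finType) (q : sharpV V1 v2 -> W).

Local Notation gs := (q \o sS v1 v2 src1 src2).
Local Notation gt := (q \o sT v1 v2 tgt1 tgt2).
Local Notation q1 := (q \o iota1 v1 v2).
Local Notation q2 := (q \o iota2 v1 v2).
Local Notation b := (q (sharp_base v1 v2)).

Definition good := forall x y, q (iota1 v1 v2 x) = q (iota2 v1 v2 y) -> q (iota1 v1 v2 x) = b.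

Lemma pick_inl (P : pred (E1 + E2)%type) : (forall x, P x -> x \in codom inl) ->
  pick P = omap inl (pick (fun x => P (inl x))).
Proof.
move=> HP; rewrite pick_sum; case: pickP => //= _.
case: pickP => //= x /HP /codomP[y] //.
Qed.

Lemma pick_inr (P : pred (E1 + E2)%type) : (forall x, P x -> x \in codom inr) ->
  pick P = omap inr (pick (fun x => P (inr x))).
Proof.
move=> HP; rewrite pick_sum; case: pickP => //= x /HP /codomP[y] //.
Qed.

Lemma cyc_inl (C : {set _}) : is_cycle gs gt (inl @: C) = is_cycle (q1 \o src1) (q1 \o tgt1) C.
Proof. by apply: emb_cycle => //; apply: inl_inj. Qed.
Lemma cyc_inr (C : {set _}) : is_cycle gs gt (inr @: C) = is_cycle (q2 \o src2) (q2 \o tgt2) C.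
Proof. by apply: emb_cycle => //; apply: inr_inj. Qed.
Lemma dcyc_inl (C : {set _}) : is_dcycle gs gt (inl @: C) = is_dcycle (q1 \o src1) (q1 \o tgt1) C.
Proof. by apply: emb_dcycle => //; apply: inl_inj. Qed.
Lemma dcyc_inr (C : {set _}) : is_dcycle gs gt (inr @: C) = is_dcycle (q2 \o src2) (q2 \o tgt2) C.
Proof. by apply: emb_dcycle => //; apply: inr_inj. Qed.
Lemma pad_inl (C : {set _}) : pad_edges gs gt (inl @: C) = map inl (pad_edges (q1 \o src1) (q1 \o tgt1) C).
Proof. by apply: emb_pad => //; [apply: inl_inj | apply: pick_inl]. Qed.
Lemma pad_inr (C : {set _}) : pad_edges gs gt (inr @: C) = map inr (pad_edges (q2 \o src2) (q2 \o tgt2) C).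
Proof. by apply: emb_pad => //; [apply: inr_inj | apply: pick_inr]. Qed.

Definition isl (e : (E1 + E2)%type) := if e is inl _ then true else false.

Lemma joins_side e a c : joins gs gt e a c ->
  if isl e then (exists x, a = q1 x) else (exists y, a = q2 y).
Proof.
case: e => e /orP[]/andP[/eqP H1 /eqP H2] /=;
  [exists (src1 e) | exists (tgt1 e) | exists (src2 e) | exists (tgt2 e)];
  by [rewrite -H1 | rewrite -H2].
Qed.

Lemma joins_side2 e a c : joins gs gt e a c ->
  if isl e then (exists x, c = q1 x) else (exists y, c = q2 y).
Proof. by rewrite joinsC; apply: joins_side. Qed.

Lemma glue_sep : good -> forall C, is_cycle gs gt C ->
  {in C, forall e, isl e} \/ {in C, forall e, ~~ isl e}.
Proof.
move=> Hg C; rewrite is_cycleE => /gcycP[es [vs [Hc HC]]].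
case: (boolP [forall e in C, isl e]) => [/forall_inP H|]; first by left.
case: (boolP [forall e in C, ~~ isl e]) => [/forall_inP H|]; first by right.
move=> /forall_inPn[e2 He2 /negPn Hl2] /forall_inPn[e1 He1 Hl1]; exfalso.
move: Hc => /and5P[ues uvs /eqP Hsz Hpos Hall].
set n := size es.
move: He1 He2; rewrite -HC !inE => He1 He2.
have e0 := e1.
case: vs Hsz Hall uvs => [|w0 vs'] Hsz Hall uvs; first by rewrite -Hsz in Hpos.
set vs := w0 :: vs' in Hsz Hall uvs.
move/(all_cycP _ e0 w0 Hsz): Hall => Hall.
have Hmid : forall k, (k < n)%N -> isl (nth e0 es k) != isl (nth e0 es (k.+1 %% n)) ->
    nth w0 vs (k.+1 %% n) = b.
  move=> k Hk Hne.
  have Hk1 : (k.+1 %% n < n)%N by rewrite ltn_pmod.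
  have J1 := joins_side2 (Hall k Hk).
  have J2 := joins_side (Hall _ Hk1).
  move: Hne J1 J2; case: (isl (nth e0 es k)); case: (isl (nth e0 es (k.+1 %% n))) => //= _.
    by move=> [x ->] [y] /Hg.
  by move=> [y ->] [x] Hx; rewrite Hx; apply: (Hg x y); rewrite -Hx.
have [i Hi Hei] : exists2 i, (i < n)%N & nth e0 es i = e1.
  by exists (index e1 es); rewrite ?index_mem ?nth_index.
have [j Hj Hej] : exists2 j, (j < n)%N & nth e0 es j = e2.
  by exists (index e2 es); rewrite ?index_mem ?nth_index.
have Pj : isl (nth e0 es j) by rewrite Hej.
have Pi : ~~ isl (nth e0 es i) by rewrite Hei.
have [k Hk /andP[Hk1 Hk2]] := @cyclic_switch (fun m => isl (nth e0 es m)) n j i Hj Hi Pj Pi.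
have [k' Hk' /andP[Hk1' Hk2']] := @cyclic_switch (fun m => ~~ isl (nth e0 es m)) n i j Hi Hj Pi ltac:(by rewrite /= Pj).
have F1 := Hmid k Hk ltac:(by rewrite Hk1 (negbTE Hk2)).
have F2 := Hmid k' Hk' ltac:(by move: Hk1' Hk2'; case: (isl _); case: (isl _)).
have Hkk : k != k' by apply: contraTneq Hk1 => ->.
have Hn : (0 < n)%N by [].
have Hsz' : size vs = n by rewrite Hsz.
have L1 : (k.+1 %% n < size vs)%N by rewrite Hsz' ltn_pmod.
have L2 : (k'.+1 %% n < size vs)%N by rewrite Hsz' ltn_pmod.
move: (nth_uniq w0 L1 L2 uvs).
rewrite F1 F2 eqxx => /esym/eqP.
rewrite -addn1 -(addn1 k') => /eqP; rewrite eqn_modDr !modn_small // => /eqP Hkk2.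
by rewrite Hkk2 eqxx in Hkk.
Qed.


Lemma glue_split : good -> forall C, is_cycle gs gt C ->
  (exists2 C1 : {set E1}, C = inl @: C1 & is_cycle (q1 \o src1) (q1 \o tgt1) C1) \/
  (exists2 C2 : {set E2}, C = inr @: C2 & is_cycle (q2 \o src2) (q2 \o tgt2) C2).
Proof.
move=> Hg C HC; case: (glue_sep Hg HC) => H; [left|right].
  have HCe : C = inl @: (inl @^-1: C).
    apply/setP => x; apply/idP/imsetP => [Hx|[y]]; last by rewrite inE => Hy ->.
    by move: (H x Hx); case: x Hx => // y Hy _; exists y; rewrite ?inE.
  by exists (inl @^-1: C) => //; rewrite -cyc_inl -HCe.
have HCe : C = inr @: (inr @^-1: C).
  apply/setP => x; apply/idP/imsetP => [Hx|[y]]; last by rewrite inE => Hy ->.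
  by move: (H x Hx); case: x Hx => // y Hy _; exists y; rewrite ?inE.
by exists (inr @^-1: C) => //; rewrite -cyc_inr -HCe.
Qed.

Lemma forall_sum (P : pred (E1 + E2)%type) :
  [forall e, P e] = [forall e, P (inl e)] && [forall e, P (inr e)].
Proof.
apply/forallP/andP => [H|[/forallP H1 /forallP H2]]; first by split; apply/forallP.
by case.
Qed.

Lemma inl_in_inr (C2 : {set E2}) (e : E1) : (inl e \in inr @: C2) = false.
Proof. by apply/negbTE/negP => /imsetP[]. Qed.
Lemma inr_in_inl (C1 : {set E1}) (e : E2) : (inr e \in inl @: C1) = false.
Proof. by apply/negbTE/negP => /imsetP[]. Qed.

Lemma glue_cc : good -> cc gs gt = cc (q1 \o src1) (q1 \o tgt1) && cc (q2 \o src2) (q2 \o tgt2).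
Proof.
move=> Hg; rewrite /cc andbACA forall_sum; congr (_ && _); first congr (_ && _).
- apply: eq_forallb => e; congr (_ == _).
  rewrite -(card_imset _ (imset_inj (@inl_inj E1 E2))); apply: eq_card => C.
  rewrite inE; apply/andP/imsetP => [[HC He]|[C1]]; last first.
    by rewrite inE => /andP[HC1 He1] ->; rewrite cyc_inl (mem_imset _ _ (@inl_inj E1 E2)).
  case: (glue_split Hg HC) => -[C' HC' Hcyc]; last by rewrite HC' inl_in_inr in He.
  exists C' => //; rewrite inE Hcyc /=; move: He; rewrite HC'.
  by rewrite (mem_imset _ _ (@inl_inj E1 E2)).
- apply: eq_forallb => e; congr (_ == _).
  rewrite -(card_imset _ (imset_inj (@inr_inj E1 E2))); apply: eq_card => C.
  rewrite inE; apply/andP/imsetP => [[HC He]|[C1]]; last first.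
    by rewrite inE => /andP[HC1 He1] ->; rewrite cyc_inr (mem_imset _ _ (@inr_inj E1 E2)).
  case: (glue_split Hg HC) => -[C' HC' Hcyc]; first by rewrite HC' inr_in_inl in He.
  exists C' => //; rewrite inE Hcyc /=; move: He; rewrite HC'.
  by rewrite (mem_imset _ _ (@inr_inj E1 E2)).
apply/forallP/andP => [H|[/forallP H1 /forallP H2] C].
  split; apply/forallP => C.
    by rewrite -cyc_inl -dcyc_inl; apply: H.
  by rewrite -cyc_inr -dcyc_inr; apply: H.
apply/implyP => HC; case: (glue_split Hg HC) => -[C' -> Hcyc].
  by rewrite dcyc_inl; move/implyP: (H1 C'); apply.
by rewrite dcyc_inr; move/implyP: (H2 C'); apply.
Qed.

Lemma glue_pprod (A : Type) (K : comNzRingType) (kappa : seq A -> K) g1 g2 : good ->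
  pprod gs gt kappa (sharp_lab g1 g2) =
  (pprod (q1 \o src1) (q1 \o tgt1) kappa g1 * pprod (q2 \o src2) (q2 \o tgt2) kappa g2)%R.
Proof.
move=> Hg; rewrite /pprod (bigID (fun C : {set (E1 + E2)%type} => [exists x, inl x \in C])) /=.
congr (_ * _)%R.
  rewrite (eq_bigl (mem ((fun C1 : {set E1} => inl @: C1) @: [set C1 | is_cycle (q1 \o src1) (q1 \o tgt1) C1]))); last first.
    move=> C /=; apply/andP/imsetP => [[HC /existsP[x Hx]]|[C1]].
      case: (glue_split Hg HC) => -[C' HC' Hcyc]; last by rewrite HC' inl_in_inr in Hx.
      by exists C' => //; rewrite inE.
    rewrite inE => HC1 ->; split; first by rewrite cyc_inl.
    apply/existsP; case/gcycP: HC1 => es [vs [/and5P[_ _ _ Hpos _] Hes]].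
    by case: es Hpos Hes => // e es _ <-; exists e; rewrite (mem_imset _ _ (@inl_inj E1 E2)) inE mem_head.
  rewrite big_imset; last by move=> C1 C2 _ _; apply: imset_inj; apply: inl_inj.
  apply: eq_big => C1; first by rewrite inE.
  by move=> _; rewrite pad_inl -map_comp.
rewrite (eq_bigl (mem ((fun C2 : {set E2} => inr @: C2) @: [set C2 | is_cycle (q2 \o src2) (q2 \o tgt2) C2]))); last first.
  move=> C /=; apply/andP/imsetP => [[HC /existsPn Hx]|[C2]].
    case: (glue_split Hg HC) => -[C' HC' Hcyc]; last by exists C' => //; rewrite inE.
    exfalso; case/gcycP: Hcyc => es [vs [/and5P[_ _ _ Hpos _] Hes]].
    case: es Hpos Hes => // e es _ Hes; move: (Hx e).
    by rewrite HC' (mem_imset _ _ (@inl_inj E1 E2)) -Hes inE mem_head.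
  rewrite inE => HC2 ->; split; first by rewrite cyc_inr.
  by apply/existsPn => x; rewrite inl_in_inr.
rewrite big_imset; last by move=> C1 C2 _ _; apply: imset_inj; apply: inr_inj.
apply: eq_big => C2; first by rewrite inE.
by move=> _; rewrite pad_inr -map_comp.
Qed.

End Glue.

Section Paths.
Variables (E W : finType) (s t : E -> W).

Definition tpath (es : seq E) (vs : seq W) (y : W) :=
  (size vs == size es) && all (fun p => joins s t p.1 p.2.1 p.2.2) (zip es (zip vs (rcons (behead vs) y))).

Definition rr (R : pred W) (A : pred E) (a b : W) := R a && [exists e, A e && joins s t e a b].

Lemma joins_eq e a b c d : joins s t e a b -> joins s t e c d -> (a == c) || (a == d).
Proof.
by rewrite /joins => /orP[]/andP[/eqP H1 /eqP H2] /orP[]/andP[/eqP H3 /eqP H4]; subst; rewrite !eqxx ?orbT.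
Qed.

Lemma tpath_nth es vs y e0 w0 k : tpath es vs y -> (k < size es)%N ->
  joins s t (nth e0 es k) (nth w0 (rcons vs y) k) (nth w0 (rcons vs y) k.+1).
Proof.
move=> /andP[/eqP Hsz Hall] Hk.
case: vs Hsz Hall => [|w vs] Hsz Hall; first by rewrite -Hsz in Hk.
have Hsz2 : size (zip (w :: vs) (rcons (behead (w :: vs)) y)) = size es.
  by rewrite size_zip size_rcons /= -Hsz /= minnn.
move/(all_nthP (e0, (w0, w0))): Hall => /(_ k).
rewrite size_zip Hsz2 minnn => /(_ Hk).
rewrite nth_zip // nth_zip /=; last by rewrite size_rcons.
have -> : rcons vs y = behead (rcons (w :: vs) y) by [].
rewrite nth_behead.
change (w :: behead (rcons (w :: vs) y)) with (rcons (w :: vs) y).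
have Hk2 : (k < size (w :: vs))%N by rewrite Hsz.
by rewrite (nth_rcons w0 (w :: vs) y k) Hk2.
Qed.

Lemma tpath_uniq es vs y : tpath es vs y -> uniq (rcons vs y) -> uniq es.
Proof.
move=> Hp Hu; apply: contraT => /negP/negP.
case: es Hp => // e0 es' Hp.
move/(uniqPn e0) => [i [j [Hij Hj Heq]]].
have w0 := y.
have Ji := tpath_nth e0 w0 Hp (ltn_trans Hij Hj).
have Jj := tpath_nth e0 w0 Hp Hj.
rewrite Heq in Ji.
move: Hp => /andP[/eqP Hsz _].
have Hs : size (rcons vs y) = (size (e0 :: es')).+1 by rewrite size_rcons Hsz.
rewrite joinsC in Jj.
have Hjs : (j.+1 < size (rcons vs y))%N by rewrite Hs ltnS.
have His : (i < size (rcons vs y))%N by rewrite Hs ltnS ltnW // (ltn_trans Hij Hj).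
have His1 : (i.+1 < size (rcons vs y))%N by rewrite Hs ltnS; exact: ltnW (leq_ltn_trans Hij Hj).
have := joins_eq Jj Ji; rewrite !nth_uniq // eqSS.
by move/orP => [/eqP E1|/eqP E2]; [rewrite -E1 ltnNge leqnSn in Hij | rewrite E2 ltnn in Hij].
Qed.

Lemma tpath_cycle es1 vs1 es2 vs2 x y :
  tpath es1 vs1 y -> tpath es2 vs2 x -> head x vs1 = x -> head y vs2 = y ->
  (0 < size vs1)%N -> (0 < size vs2)%N ->
  uniq (vs1 ++ vs2) -> uniq (es1 ++ es2) -> cyc_seq (joins s t) (es1 ++ es2) (vs1 ++ vs2).
Proof.
move=> /andP[/eqP Hs1 H1] /andP[/eqP Hs2 H2] Hx Hy P1 P2 Uv Ue.
apply/and5P; split => //; first by rewrite !size_cat Hs1 Hs2.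
  by rewrite size_cat -Hs1 addn_gt0 P1.
case: vs1 Hs1 H1 Hx P1 Uv => // a vs1 Hs1 H1 /= Hx _ Uv.
case: vs2 Hs2 H2 Hy P2 Uv => // c vs2 Hs2 H2 /= Hy _ Uv.
subst a c.
rewrite -cat_cons rot1_cons rcons_cat /=.
have -> : vs1 ++ y :: rcons vs2 x = rcons vs1 y ++ rcons vs2 x by rewrite cat_rcons.
rewrite -[x :: vs1 ++ y :: vs2]/((x :: vs1) ++ (y :: vs2)).
rewrite zip_cat ?size_rcons // zip_cat ?all_cat ?H1 ?H2 //.
by rewrite size_zip size_rcons -Hs1 /= minnn.
Qed.

Lemma path_of_connect (R : pred W) (A : pred E) x y :
  connect (rr R A) x y -> x != y ->
  exists es vs, [/\ tpath es vs y, head x vs = x, (0 < size vs)%N,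
                    uniq (rcons vs y) & all A es /\ all R vs].
Proof.
move=> /connectP[p Hp ->].
case: (shortenP Hp) => p' Hp' Up' _ Hne.
have Hgen : forall z (l : seq W), path (rr R A) z l -> exists es,
   [/\ size es = size l, all (fun p => joins s t p.1 p.2.1 p.2.2) (zip es (zip (belast z l) l)),
       all A es & all R (belast z l)].
  move=> z l; elim: l z => [|c l IH] z /=; first by exists [::].
  case/andP => /andP[Rz /existsP[e /andP[Ae Je]]] /IH[es [Hs Hall HA HR]].
  by exists (e :: es); rewrite /= Hs Je Hall Ae HR Rz.
case: p' Hp' Up' Hne => [|c l] Hp' Up' Hne; first by rewrite /= eqxx in Hne.
have [es [Hs Hall HA HR]] := Hgen _ _ Hp'.
exists es, (belast x (c :: l)); split => //.
- apply/andP; split; first by rewrite size_belast Hs.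
  by rewrite /= -lastI.
- by rewrite /= -lastI.
Qed.

End Paths.

Lemma conn_lift (V E E' W : finType) (s1 t1 : E -> V) (ES : {set E}) (s' t' : E' -> W)
  (phi : V -> W) (psi : E -> E') (A' : pred E') :
  (forall e, s' (psi e) = phi (s1 e)) -> (forall e, t' (psi e) = phi (t1 e)) ->
  (forall e, e \in ES -> A' (psi e)) -> gconnected s1 t1 ES setT ->
  forall x y, connect (rr s' t' predT A') (phi x) (phi y).
Proof.
move=> Hs Ht HA /forallP H x y.
move: (H x) => /implyP /(_ (in_setT _)) /forallP /(_ y) /implyP /(_ (in_setT _)).
apply: connect_map => a b /existsP[e /andP[He Hj]].
apply/andP; split => //; apply/existsP; exists (psi e); rewrite HA //=.
by move: Hj; rewrite /joins Hs Ht => /orP[]/andP[/eqP-> /eqP->]; rewrite !eqxx ?orbT.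
Qed.

Section Bad.
Variables (V1 E1 V2 E2 : finType) (v1 : V1) (v2 : V2).
Variables (src1 tgt1 : E1 -> V1) (src2 tgt2 : E2 -> V2).
Variables (W : finType) (q : sharpV V1 v2 -> W).

Local Notation gs := (q \o sS v1 v2 src1 src2).
Local Notation gt := (q \o sT v1 v2 tgt1 tgt2).
Local Notation q1 := (q \o iota1 v1 v2).
Local Notation q2 := (q \o iota2 v1 v2).
Local Notation isL := (@isl E1 E2).
Local Notation b := (q (sharp_base v1 v2)).

Lemma tpath_inr es vs y : tpath gs gt es vs y -> all (fun e => ~~ isL e) es ->
  all (fun a => a \in codom q2) vs.
Proof.
move=> Hp Hes; have Hsz : size vs = size es by case/andP: Hp => /eqP.
case: es Hp Hes Hsz => [|e0 es] Hp Hes Hsz; first by move: Hsz; case: (vs).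
apply/(all_nthP y) => k Hk.
have Hk' : (k < size (e0 :: es))%N by rewrite -Hsz.
have := joins_side (tpath_nth e0 y Hp Hk').
have -> : nth y (rcons vs y) k = nth y vs k by rewrite nth_rcons Hk.
have /negbTE -> : ~~ isL (nth e0 (e0 :: es) k) by apply: (allP Hes); rewrite mem_nth.
by case=> z ->; rewrite codom_f.
Qed.

Lemma glue_bad : gconnected src1 tgt1 setT setT -> two_edge_connected src2 tgt2 ->
  forall x y, q (iota1 v1 v2 x) = q (iota2 v1 v2 y) -> q (iota1 v1 v2 x) != b ->
  cc gs gt = false.
Proof.
move=> HT1 /andP[HT2 /forallP HT2e] x y HB HBb.
set B := q (iota1 v1 v2 x) in HB HBb.
have HB2 : B \in codom q2 by rewrite HB; apply: codom_f.
have Hb2 : b \in codom q2 by rewrite -(iota2_v2 v1 v2); apply: (codom_f q2).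
have C1 : connect (rr gs gt predT isL) B b.
  have := conn_lift (s1 := src1) (t1 := tgt1) (s' := gs) (t' := gt) (phi := q1) (psi := inl)
    (A' := isL) (fun _ => erefl) (fun _ => erefl) (fun _ _ => erefl) HT1 x v1.
  by rewrite /= (iota1_v1 v1 v2).
set R := fun a => (a == B) || (a \notin codom q2).
have [w [Hw2 HwB Hconn]] : exists w, [/\ w \in codom q2, w != B & connect (rr gs gt R isL) B w].
  case: (boolP [exists w, [&& w \in codom q2, w != B & connect (rr gs gt R isL) B w]]).
    by case/existsP => w /and3P[? ? ?]; exists w.
  move/existsPn => H0; exfalso.
  have Hc : forall u, connect (rr gs gt predT isL) B u -> connect (rr gs gt R isL) B u.
    move=> u /connectP[p Hp ->]; elim/last_ind: p Hp => [|p z IH] //.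
    rewrite rcons_path last_rcons => /andP[Hp /andP[_ Hz]].
    have Ha := IH Hp; eapply connect_trans; [exact: Ha | apply: connect1].
    apply/andP; split => //; rewrite /R.
    case: (eqVneq (last B p) B) => //= Hne.
    apply: contraT => /negPn Hin; move: (H0 (last B p)).
    by rewrite Hin Hne Ha.
  by move: (H0 b); rewrite Hb2 eq_sym HBb (Hc _ C1).
have HBw : B != w by rewrite eq_sym.
have [es1 [vs1 [P1 H1 S1 U1 [A1 R1]]]] := path_of_connect Hconn HBw.
have [y' Hy'] : exists y', w = q2 y' by case/codomP: Hw2 => y' ->; exists y'.
have Cw : connect (rr gs gt predT (fun e => ~~ isL e)) w B.
  have := conn_lift (s1 := src2) (t1 := tgt2) (s' := gs) (t' := gt) (phi := q2) (psi := inr)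
    (A' := fun e => ~~ isL e) (fun _ => erefl) (fun _ => erefl) (fun _ _ => erefl) HT2 y' y.
  by move=> H; rewrite Hy' HB; exact: H.
have [es2 [vs2 [P2 H2 S2 U2 [A2 _]]]] := path_of_connect Cw HwB.
have V2in := tpath_inr P2 A2.
case: es2 P2 A2 => [|e es2'] P2 A2.
  by move: P2 S2 => /andP[/eqP Hs _]; rewrite Hs.
case: vs2 P2 S2 H2 U2 V2in => [|w' vs2'] // P2 _ Hw' U2 V2in.
rewrite /= in Hw'; subst w'.
have Hle : ~~ isL e by move: A2 => /andP[].
case: e P2 A2 Hle => // e2 P2 A2 _.
have U1' : uniq vs1 by move: U1; rewrite rcons_uniq => /andP[].
have U2' : uniq (w :: vs2') by move: U2; rewrite rcons_uniq => /andP[].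
have NB2 : B \notin w :: vs2' by move: U2; rewrite rcons_uniq => /andP[].
have Hcyc1 : cyc_seq (joins gs gt) (es1 ++ inr e2 :: es2') (vs1 ++ w :: vs2').
  apply: (tpath_cycle P1 P2 H1 (erefl _) S1 (erefl _)).
    rewrite cat_uniq U1' U2' andbT; apply/hasPn => a Ha2; apply/negP => Ha1.
    have := allP R1 a Ha1; rewrite /R (allP V2in a Ha2) orbF => /eqP Ha.
    by rewrite -Ha Ha2 in NB2.
  rewrite cat_uniq (tpath_uniq P1 U1) (tpath_uniq P2 U2) andbT.
  apply/hasPn => e0 He2; apply/negP => He1.
  by move: (allP A1 e0 He1) (allP A2 e0 He2) => ->.
set C := [set z in es1 ++ inr e2 :: es2'].
have HC : is_cycle gs gt C by rewrite is_cycleE; apply/gcycP; exists (es1 ++ inr e2 :: es2'), (vs1 ++ w :: vs2').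
set z := nth w (rcons (w :: vs2') B) 1.
have Jz : joins gs gt (inr e2) w z by exact: (tpath_nth (inr e2) w P2 (ltn0Sn (size es2'))).
have Hwz : w != z.
  rewrite /z; have := nth_uniq w (_ : 0 < size (rcons (w :: vs2') B))%N (_ : 1 < size (rcons (w :: vs2') B))%N U2.
  by move=> /(_ isT) /(_ ltac:(by rewrite size_rcons)) /= ->.
have [yz Hyz] : exists yz, z = q2 yz.
  by move: (joins_side2 Jz) => /= [yz ->]; exists yz.
have Cz : connect (rr gs gt predT (fun e => ~~ isL e && (e != inr e2))) z w.
  have := conn_lift (s1 := src2) (t1 := tgt2) (s' := gs) (t' := gt) (phi := q2) (psi := inr)
    (A' := fun e => ~~ isL e && (e != inr e2)) (fun _ => erefl) (fun _ => erefl) _ (HT2e e2) yz y'.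
  move=> H; rewrite Hy' Hyz; apply: H => e; rewrite !inE /= => He.
  by rewrite (inj_eq (@inr_inj E1 E2)).
have [es3 [vs3 [P3 H3 S3 U3 [A3 _]]]] := path_of_connect Cz (negbT (introF eqP (fun h => negP Hwz (introT eqP (esym h))))).
have Hcyc2 : cyc_seq (joins gs gt) (es3 ++ [:: inr e2]) (vs3 ++ [:: w]).
  have Pe : tpath gs gt [:: inr e2] [:: w] z by rewrite /tpath /= Jz.
  apply: (tpath_cycle P3 Pe H3 (erefl _) S3 isT).
    by rewrite cats1.
  rewrite cats1 rcons_uniq (tpath_uniq P3 U3) andbT.
  by apply/negP => /(allP A3) /=; rewrite eqxx.
set C' := [set z0 in es3 ++ [:: inr e2]].
have HC' : is_cycle gs gt C' by rewrite is_cycleE; apply/gcycP; exists (es3 ++ [:: inr e2]), (vs3 ++ [:: w]).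
have HeC : inr e2 \in C by rewrite inE mem_cat mem_head orbT.
have HeC' : inr e2 \in C' by rewrite inE mem_cat mem_head orbT.
have HCC : C != C'.
  have [e1 He1] : exists e1, e1 \in es1.
    move: P1 S1 => /andP[/eqP Hs _]; rewrite Hs.
    by case: (es1) => // e1 ? _; exists e1; rewrite mem_head.
  apply/negP => /eqP HCe.
  have : e1 \in C' by rewrite -HCe inE mem_cat He1.
  rewrite inE mem_cat => /orP[/(allP A3)|]; last by rewrite inE => /eqP Hx; move: (allP A1 e1 He1); rewrite Hx.
  by rewrite (allP A1 e1 He1).
rewrite /cc; apply/negbTE/nandP; left; apply/forallPn; exists (inr e2).
apply/negP => /eqP Hcard.
have : #|[set C; C']| <= #|[set C0 : {set (E1 + E2)%type} | is_cycle gs gt C0 & inr e2 \in C0]|.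
  apply: subset_leq_card; apply/subsetP => C0; rewrite !inE => /orP[]/eqP ->.
    by rewrite HC HeC.
  by rewrite HC' HeC'.
by rewrite cards2 HCC Hcard.
Qed.

End Bad.

Section Part.
Variable T : finType.

Lemma part_codom (P : {set {set T}}) : partition P setT -> {subset P <= codom (pblock P)}.
Proof.
move=> /and3P[_ tI n0] B HB.
have : B != set0 by apply: contraNneq n0 => <-.
case/set0Pn => x Hx; by rewrite -(def_pblock tI HB Hx) codom_f.
Qed.

Lemma pblock_eq (P : {set {set T}}) x y : partition P setT ->
  (pblock P x == pblock P y) = (y \in pblock P x).
Proof.
move=> /and3P[/eqP Hc tI _]; apply: eq_pblock => //; by rewrite Hc inE.
Qed.

Lemma preim_ker (rT rT' : eqType) (f : T -> rT) (g : T -> rT') (D : {set T}) :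
  (forall x y, (f x == f y) = (g x == g y)) -> preim_partition f D = preim_partition g D.
Proof.
move=> H; rewrite /preim_partition /equivalence_partition.
apply: eq_imset => x; apply/setP => y; by rewrite !inE H.
Qed.

Lemma ker_preim_pblock (rT : eqType) (f : T -> rT) x y :
  (pblock (preim_partition f setT) x == pblock (preim_partition f setT) y) = (f x == f y).
Proof.
rewrite pblock_eq ?preim_partitionP //.
rewrite /preim_partition pblock_equivalence_partition ?inE //.
by move=> a b c _ _ _; split => // /eqP ->.
Qed.

Lemma part_eq_ker (P Q : {set {set T}}) : partition P setT -> partition Q setT ->
  (forall x y, (pblock P x == pblock P y) = (pblock Q x == pblock Q y)) -> P = Q.
Proof.
move=> HP HQ H.
by rewrite -(preim_partition_pblock HP) -(preim_partition_pblock HQ); apply: preim_ker.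
Qed.

End Part.

Section SharpPart.
Variables (V1 V2 : finType) (v1 : V1) (v2 : V2).

Local Notation i1 := (iota1 v1 v2).
Local Notation i2 := (iota2 v1 v2).
Local Notation base := (sharp_base v1 v2).

Lemma ker_sharp (W1 W2 : eqType) (f : sharpV V1 v2 -> W1) (g : sharpV V1 v2 -> W2) :
  (forall x x', (f (i1 x) == f (i1 x')) = (g (i1 x) == g (i1 x'))) ->
  (forall y y', (f (i2 y) == f (i2 y')) = (g (i2 y) == g (i2 y'))) ->
  (forall x y, (f (i1 x) == f (i2 y)) = (g (i1 x) == g (i2 y))) ->
  forall w u, (f w == f u) = (g w == g u).
Proof.
move=> H11 H22 H12 w u.
case: (sharpV_cases v1 w) => [[x ->]|[y _ ->]]; case: (sharpV_cases v1 u) => [[x' ->]|[y' _ ->]] //.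
by rewrite eq_sym H12 eq_sym.
Qed.

Definition goodb (W : eqType) (q : sharpV V1 v2 -> W) :=
  [forall x, forall y, (q (i1 x) == q (i2 y)) ==> (q (i1 x) == q base)].

Lemma goodP (W : finType) (q : sharpV V1 v2 -> W) : reflect (good v1 q) (goodb q).
Proof.
apply: (iffP forallP) => [H x y /eqP Hxy|H x]; first by move: (H x) => /forallP /(_ y) /implyP /(_ Hxy) /eqP.
by apply/forallP => y; apply/implyP => /eqP /H ->.
Qed.

Variables (P1 : {set {set V1}}) (P2 : {set {set V2}}).

Definition lam (w : sharpV V1 v2) : ({set V1} + {set V2})%type :=
  match val w with
  | inl x => inl (pblock P1 x)
  | inr y => if y \in pblock P2 v2 then inl (pblock P1 v1) else inr (pblock P2 y)
  end.

Lemma lam1 x : lam (i1 x) = inl (pblock P1 x).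
Proof. by rewrite /lam val_iota1. Qed.

Hypotheses (HP1 : partition P1 setT) (HP2 : partition P2 setT).

Lemma lam2 y : lam (i2 y) = if y \in pblock P2 v2 then inl (pblock P1 v1) else inr (pblock P2 y).
Proof.
case: (eqVneq y v2) => [->|Hy]; last by rewrite /lam val_iota2.
rewrite iota2_v2 -(iota1_v1 v1 v2) lam1.
have -> : v2 \in pblock P2 v2 by rewrite mem_pblock; case/and3P: HP2 => /eqP -> _ _; rewrite inE.
by [].
Qed.

Lemma mem_blk y : (y \in pblock P2 v2) = (pblock P2 y == pblock P2 v2).
Proof. by rewrite eq_sym pblock_eq. Qed.

Lemma K11 x x' : (lam (i1 x) == lam (i1 x')) = (pblock P1 x == pblock P1 x').
Proof. by rewrite !lam1 (inj_eq (@inl_inj _ _)). Qed.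

Lemma K22 y y' : (lam (i2 y) == lam (i2 y')) = (pblock P2 y == pblock P2 y').
Proof.
rewrite !lam2 !mem_blk.
case: (pblock P2 y =P pblock P2 v2) => [E1|N1]; case: (pblock P2 y' =P pblock P2 v2) => [E2|N2] /=.
- by rewrite E1 E2 !eqxx.
- by apply/esym/eqP => H; apply: N2; rewrite -H.
- by apply/esym/eqP => H; apply: N1; rewrite H.
- by rewrite (inj_eq (@inr_inj _ _)).
Qed.

Lemma K12 x y : (lam (i1 x) == lam (i2 y)) =
  (pblock P1 x == pblock P1 v1) && (pblock P2 y == pblock P2 v2).
Proof.
rewrite lam1 lam2 mem_blk; case: (pblock P2 y == pblock P2 v2) => /=.
  by rewrite (inj_eq (@inl_inj _ _)) andbT.
by rewrite andbF.
Qed.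

Lemma lam_good : good v1 lam.
Proof.
by move=> x y; rewrite lam1 lam2; case: ifP => // _ [->].

Qed.

Definition Phi := preim_partition lam setT.

Lemma Phi_ker w u : (pblock Phi w == pblock Phi u) = (lam w == lam u).
Proof. exact: ker_preim_pblock. Qed.

End SharpPart.

Section PhiProps.
Variables (V1 V2 : finType) (v1 : V1) (v2 : V2).
Local Notation i1 := (iota1 v1 v2).
Local Notation i2 := (iota2 v1 v2).
Local Notation base := (sharp_base v1 v2).

Lemma Phi_inj (P1 P1' : {set {set V1}}) (P2 P2' : {set {set V2}}) :
  partition P1 setT -> partition P1' setT -> partition P2 setT -> partition P2' setT ->
  Phi v1 v2 P1 P2 = Phi v1 v2 P1' P2' -> P1 = P1' /\ P2 = P2'.
Proof.
move=> H1 H1' H2 H2' HPhi.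
have Hk : forall w u : sharpV V1 v2, (lam v1 P1 P2 w == lam v1 P1 P2 u) = (lam v1 P1' P2' w == lam v1 P1' P2' u).
  by move=> w u; rewrite -(Phi_ker v1 P1 P2) -(Phi_ker v1 P1' P2') HPhi.
split; apply: part_eq_ker => //.
  by move=> x x'; rewrite -(K11 v1 v2 P1 P2) -(K11 v1 v2 P1' P2') Hk.
by move=> y y'; rewrite -(K22 v1 v2 P1 H2) -(K22 v1 v2 P1' H2') Hk.
Qed.

Lemma Phi_surj (P : {set {set sharpV V1 v2}}) : partition P setT -> goodb v1 (pblock P) ->
  P = Phi v1 v2 (preim_partition (pblock P \o i1) setT) (preim_partition (pblock P \o i2) setT).
Proof.
move=> HP /goodP Hg.
set P1 := preim_partition (pblock P \o i1) setT.
set P2 := preim_partition (pblock P \o i2) setT.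
have HP2 : partition P2 setT by apply: preim_partitionP.
apply: part_eq_ker => //; first by apply: preim_partitionP.
move=> w u; rewrite Phi_ker; apply: (@ker_sharp _ _ v1 v2) => [x x'|y y'|x y].
- by rewrite K11 ker_preim_pblock.
- by rewrite (K22 v1 v2 P1 HP2) ker_preim_pblock.
rewrite (K12 v1 v2 P1 HP2) !ker_preim_pblock /= (iota1_v1 v1 v2) (iota2_v2 v1 v2).
case: (eqVneq (pblock P (i1 x)) (pblock P (i2 y))) => [Hxy|Hxy].
  have Hb := Hg x y Hxy.
  by rewrite Hb -Hxy Hb eqxx.
apply/esym/negbTE; apply: contra Hxy => /andP[/eqP -> /eqP ->].
by [].
Qed.

End PhiProps.

Lemma tau0_part (A : Type) (K : nzRingType) (kappa : seq A -> K) (V E : finType)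
  (s t : E -> V) (gamma : E -> A) (P : {set {set V}}) :
  partition P setT -> gconnected s t setT setT ->
  tau0 (pblock P \o s) (pblock P \o t) kappa gamma P =
  if cc (pblock P \o s) (pblock P \o t) then pprod (pblock P \o s) (pblock P \o t) kappa gamma else 0%R.
Proof.
move=> HP Hc; rewrite tau0E gconn_label //; exact: part_codom.
Qed.


Unset Implicit Arguments. Set Strict Implicit. Set Printing Implicit Defensive.
Import GRing.Theory Num.Theory.
Local Open Scope ring_scope.

Theorem lemma2p12
  (R : realType) (Alg : algType R[i])
  (phi : {linear Alg -> R[i]^o})
  (phi_unital : phi 1 = 1)
  (phi_tracial : forall a b : Alg, phi (a * b) = phi (b * a))
  (kappa : seq Alg -> R[i])
  (kappa_free_cumulants : forall s : seq Alg,
     phi (\prod_(a <- s) a) =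
     \sum_(P : {set {set 'I_(size s)}} | NCpart P)
        \prod_(B in P) kappa [seq s`_i | i : 'I_(size s) <- enum B])
  (V1 E1 : finType) (src1 tgt1 : E1 -> V1) (gamma1 : E1 -> Alg)
  (V2 E2 : finType) (src2 tgt2 : E2 -> V2) (gamma2 : E2 -> Alg)
  (T1_connected : gconnected src1 tgt1 setT setT)
  (T2_two_edge_connected : two_edge_connected src2 tgt2)
  (v1 : V1) (v2 : V2) :
  tau kappa (sharp_src v1 v2 src1 src2) (sharp_src v1 v2 tgt1 tgt2)
      (sharp_lab gamma1 gamma2)
  = tau kappa src1 tgt1 gamma1 * tau kappa src2 tgt2 gamma2.
Proof.
have HT2c : gconnected src2 tgt2 setT setT by case/andP: T2_two_edge_connected.
have HGc : gconnected (sS v1 v2 src1 src2) (sT v1 v2 tgt1 tgt2) setT setT.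
  exact: sharp_connected.
rewrite /tau.
rewrite (eq_bigr (fun P => if cc (pblock P \o sS v1 v2 src1 src2) (pblock P \o sT v1 v2 tgt1 tgt2)
    then pprod (pblock P \o sS v1 v2 src1 src2) (pblock P \o sT v1 v2 tgt1 tgt2) kappa (sharp_lab gamma1 gamma2) else 0));
  last by move=> P HP; rewrite tau0_part.
rewrite (eq_bigr (fun P => if cc (pblock P \o src1) (pblock P \o tgt1)
    then pprod (pblock P \o src1) (pblock P \o tgt1) kappa gamma1 else 0));
  last by move=> P HP; rewrite tau0_part.
rewrite [X in _ = _ * X](eq_bigr (fun P => if cc (pblock P \o src2) (pblock P \o tgt2)
    then pprod (pblock P \o src2) (pblock P \o tgt2) kappa gamma2 else 0));
  last by move=> P HP; rewrite tau0_part.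
rewrite big_distrlr pair_big /=.
set D := [set pp : {set {set V1}} * {set {set V2}} | partition pp.1 setT && partition pp.2 setT].
set h := fun pp : {set {set V1}} * {set {set V2}} => Phi v1 v2 pp.1 pp.2.
rewrite (bigID (fun P => P \in h @: D)) /=.
rewrite [X in _ + X = _]big1 ?addr0; last first.
  move=> P /andP[HP Hnot].
  case: (boolP (goodb v1 (pblock P))) => [Hg|].
    exfalso; move/negP: Hnot; apply; rewrite (Phi_surj HP Hg).
    apply/imsetP; exists (preim_partition (pblock P \o iota1 v1 v2) setT, preim_partition (pblock P \o iota2 v1 v2) setT) => //.
    by rewrite inE /= !preim_partitionP.
  move/forallPn => [x /forallPn [y]]; rewrite negb_imply => /andP[/eqP Hxy Hne].
  by rewrite (glue_bad T1_connected T2_two_edge_connected Hxy Hne).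
rewrite (eq_bigl (mem (h @: D))); last first.
  move=> P /=; apply/andP/idP => [[]//|HP]; split => //.
  by case/imsetP: HP => pp _ ->; apply: preim_partitionP.
rewrite big_imset; last first.
  move=> pp pp'; rewrite !inE => /andP[H1 H2] /andP[H1' H2'] Hh.
  have [Q1 Q2] := Phi_inj H1 H1' H2 H2' Hh.
  by case: pp pp' Q1 Q2 {H1 H2 H1' H2' Hh} => ? ? [? ?] /= -> ->.
apply: eq_big => [pp|[P1 P2]]; first by rewrite inE.
rewrite inE /= => /andP[HP1 HP2].
rewrite /h /=.
rewrite (ker_cc (sS v1 v2 src1 src2) (sT v1 v2 tgt1 tgt2) (Phi_ker v1 P1 P2)).
rewrite (ker_pprod (sS v1 v2 src1 src2) (sT v1 v2 tgt1 tgt2) (Phi_ker v1 P1 P2)).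
rewrite (glue_cc src1 tgt1 src2 tgt2 (lam_good HP2)).
rewrite (glue_pprod src1 tgt1 src2 tgt2 kappa gamma1 gamma2 (lam_good HP2)).
rewrite (ker_cc src1 tgt1 (f := lam v1 P1 P2 \o iota1 v1 v2) (g := pblock P1) (K11 v1 v2 P1 P2)).
rewrite (ker_pprod src1 tgt1 (f := lam v1 P1 P2 \o iota1 v1 v2) (g := pblock P1) (K11 v1 v2 P1 P2)).
rewrite (ker_cc src2 tgt2 (f := lam v1 P1 P2 \o iota2 v1 v2) (g := pblock P2) (K22 v1 v2 P1 HP2)).
rewrite (ker_pprod src2 tgt2 (f := lam v1 P1 P2 \o iota2 v1 v2) (g := pblock P2) (K22 v1 v2 P1 HP2)).
by case: (cc _ _); case: (cc _ _); rewrite ?mul0r ?mulr0.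
Qed.
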